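(* Let $n\ge 1$. As polynomials in the indeterminates $x$ and $y$ with coefficients in $\mathbb{Q}[\mathfrak{S}_n]$, \[\rho^{(\ell)}(x)\rho^{(\ell)}(y)=\rho^{(\ell)}(xy),\qquad \rho^{(r)}(x)\rho^{(r)}(y)=\rho^{(\ell)}(xy),\qquad \rho^{(\ell)}(x)\rho^{(r)}(y)=\rho^{(r)}(xy),\qquad \rho^{(r)}(x)\rho^{(\ell)}(y)=\rho^{(r)}(xy),\] where $\rho^{(\ell)}(x)=\sum_{\pi\in\mathfrak{S}_n}\Omega^{(\ell)}(\pi;(x-1)/2)\,\pi$ and $\rho^{(r)}(x)=\sum_{\pi\in\mathfrak{S}_n}\Omega^{(r)}(\pi;(x-1)/2)\,\pi$.
   Context: $\mathfrak{S}_n$ is the symmetric group on $[n]$, permutations are words $(\pi(1),\dots,\pi(n))$, and multiplication in $\mathbb{Q}[\mathfrak{S}_n]$ is composition $(\sigma\tau)(i)=\sigma(\tau(i))$. Let $Z$ be a finite totally ordered set each of whose elements is declared ''plus-type'' or ''minus-type''. For $\pi\in\mathfrak{S}_n$ let $N(\pi;Z)$ be the number of sequences $(a_1,\dots,a_n)\in Z^n$ with $a_1\le\dots\le a_n$ such that for every $s\in[n-1]$: if $\pi(s)<\pi(s+1)$ then $a_s<a_{s+1}$ or ($a_s=a_{s+1}$ is plus-type); if $\pi(s)>\pi(s+1)$ then $a_s<a_{s+1}$ or ($a_s=a_{s+1}$ is minus-type). For a positive integer $k$ define the left enriched order polynomial $\Omega^{(\ell)}(\pi;k)=N(\pi;Z)$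 with $Z=\{0<\bar1<1<\bar2<2<\dots<\bar k<k\}$ and the right enriched order polynomial $\Omega^{(r)}(\pi;k)=N(\pi;Z)$ with $Z=\{\bar1<1<\bar2<2<\dots<\bar k<k<\overline{k+1}\}$, where $0$ and the unbarred $j$ are plus-type and barred elements $\bar j$ are minus-type. As functions of $k$ these are restrictions of unique polynomials with rational coefficients, denoted by the same symbols; these polynomials are evaluated at $(x-1)/2$ above. *)

(* Defs.v *)
From HB Require Import structures.
From mathcomp Require Import all_boot all_order all_algebra all_fingroup.
Set Implicit Arguments. Unset Strict Implicit. Unset Printing Implicit Defensive.
Import Order.TTheory GRing.Theory Num.Theory.
Local Open Scope ring_scope.

(* Z is encoded as the ordinal type 'I_m (its total order is the order of  *)
(* positions), and [plus p] says whether the element at position p is      *)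
(* plus-type.  Positions in [n] are 0-based: position s of the paper is    *)
(* the ordinal s-1.                                                         *)
Definition Ncount (n m : nat) (plus : nat -> bool) (pi : 'S_n) : nat :=
  #|[set a : {ffun 'I_n -> 'I_m} |
     [forall i : 'I_n, forall j : 'I_n, (nat_of_ord j == i.+1) ==>
        [&& (a i <= a j)%N &
         if (pi i < pi j)%N
         then (a i < a j)%N || ((a i == a j) && plus (a i))
         else (a i < a j)%N || ((a i == a j) && ~~ plus (a i))]]]|.

(* Left: Z = {0 < 1bar < 1 < ... < kbar < k}; position 0 is 0, position    *)
(* 2j-1 is jbar (minus-type), position 2j is j (plus-type).                 *)
Definition Omega_left_count (n : nat) (pi : 'S_n) (k : nat) : nat :=
  Ncount (2 * k).+1 (fun p => ~~ odd p) pi.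

(* Right: Z = {1bar < 1 < ... < kbar < k < (k+1)bar}; position 2j-2 is    *)
(* jbar (minus), position 2j-1 is j (plus), position 2k is (k+1)bar.        *)
Definition Omega_right_count (n : nat) (pi : 'S_n) (k : nat) : nat :=
  Ncount (2 * k).+1 (fun p => odd p) pi.

(* {poly {poly rat}}: the inner variable is x, the outer one is y.          *)
Definition varX : {poly {poly rat}} := ('X)%:P.
Definition varY : {poly {poly rat}} := 'X.

Definition peval (p : {poly rat}) (u : {poly {poly rat}}) : {poly {poly rat}} :=
  (map_poly (fun c : rat => c%:P%:P) p).[u].

Definition half_shift (u : {poly {poly rat}}) : {poly {poly rat}} :=
  (u - 1) * ((2%:R : rat)^-1)%:P%:P.

(* An element sum_pi c_pi pi is represented by its coefficient function.   *)
(* Product uses the paper's composition (sigma tau)(i) = sigma(tau(i)),     *)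
(* which is (tau * sigma)%g in mathcomp (since (s * t) i = t (s i)).        *)
Definition galg_mul (n : nat) (a b : 'S_n -> {poly {poly rat}}) (sigma : 'S_n)
  : {poly {poly rat}} :=
  \sum_(pi : 'S_n) \sum_(tau : 'S_n | (tau * pi)%g == sigma) a pi * b tau.

Definition rho (n : nat) (P : 'S_n -> {poly rat}) (u : {poly {poly rat}})
  : 'S_n -> {poly {poly rat}} :=
  fun pi => peval (P pi) (half_shift u).

(* Main.v *)
Require Import Defs.
From HB Require Import structures.
From mathcomp Require Import all_boot all_order all_algebra all_fingroup.
From mathcomp Require Import zify.
Import GRing.Theory.
Set Implicit Arguments. Unset Strict Implicit. Unset Printing Implicit Defensive.

Local Open Scope nat_scope.

Definition precN (p : nat -> bool) (a x b y : nat) : bool :=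
  (a < b) || ((a == b) && (if p b then x < y else y < x)).

Lemma precN_irr p a x : precN p a x a x = false.
Proof. by rewrite /precN ltnn eqxx; case: (p a); rewrite ltnn. Qed.

Lemma precN_trans p a x b y c z :
  precN p a x b y -> precN p b y c z -> precN p a x c z.
Proof.
rewrite /precN => /orP [H1|/andP [/eqP E1 H1]] /orP [H2|/andP[/eqP E2 H2]]; subst.
- by rewrite (ltn_trans H1 H2).
- by rewrite H1.
- by rewrite H2.
- move: H1 H2; rewrite ?ltnn ?eqxx /=; case: (p _) => /= H1 H2; lia.
Qed.

Lemma precN_total p a x b y : x != y -> precN p a x b y || precN p b y a x.
Proof.
rewrite /precN => Hxy; case: (ltngtP a b) => //= E; subst.
rewrite ?ltnn ?eqxx /=; case: (p _); lia.
Qed.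

Lemma precN_asym p a x b y : precN p a x b y -> precN p b y a x -> False.
Proof. by move=> H1 H2; have := precN_trans H1 H2; rewrite precN_irr. Qed.

Lemma card_bij_set (T1 T2 : finType) (g : T1 -> T2) (Q : pred T2) :
  bijective g -> #|[set a | Q (g a)]| = #|[set w | Q w]|.
Proof.
move=> bg; rewrite -(card_imset _ (bij_inj bg)); apply: eq_card => w.
rewrite inE; apply/imsetP/idP => [[a] | Hw].
  by rewrite inE => Ha ->.
case: bg => h gh hg; exists (h w); by rewrite ?inE hg.
Qed.

Lemma card_sum (T : finType) (P : pred T) : #|[set x | P x]| = \sum_x (P x : nat).
Proof.
rewrite -sum1_card big_mkcond /=; apply: eq_bigr => x _; rewrite inE; by case: (P x).
Qed.

Section Std.
Variable n : nat.

Definition prec (m : nat) (plus : nat -> bool) (w : {ffun 'I_n -> 'I_m}) (x y : 'I_n) : bool :=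
  precN plus (w x) x (w y) y.

Variables (m : nat) (plus : nat -> bool).
Implicit Types (w : {ffun 'I_n -> 'I_m}).

Definition rk w (y : 'I_n) := #|[set x | prec plus w x y]|.

Lemma rk_lt w y : rk w y < n.
Proof.
rewrite -[n]card_ord -cardsT; apply: proper_card; apply/properP; split.
  by apply/subsetP => x; rewrite inE.
by exists y; rewrite ?inE // /prec precN_irr.
Qed.

Lemma rk_mono w x y : prec plus w x y -> rk w x < rk w y.
Proof.
move=> Hxy; apply: proper_card; apply/properP; split.
  apply/subsetP => z; rewrite !inE => Hz; exact: precN_trans Hz Hxy.
by exists x; rewrite !inE // /prec precN_irr.
Qed.

Definition std_fun w (y : 'I_n) : 'I_n := Ordinal (rk_lt w y).

Lemma std_inj w : injective (std_fun w).
Proof.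
move=> x y /(congr1 val) /= E; apply/eqP; apply/negPn/negP => Hxy.
have : x != y :> nat by [].
move/(precN_total plus (w x) (w y)); case/orP => /rk_mono; rewrite E ltnn //.
Qed.

Definition std w : 'S_n := perm (@std_inj w).

Lemma std_spec w x y : prec plus w x y = (std w x < std w y).
Proof.
rewrite !permE /=; case H: (prec plus w x y); first by rewrite rk_mono.
case: (eqVneq x y) => [->|Hxy]; first by rewrite ltnn.
have : x != y :> nat by [].
move/(precN_total plus (w x) (w y)); rewrite [precN _ _ _ _ _]H /= => /rk_mono H2.
by rewrite ltnNge ltnW.
Qed.

Lemma card_lt_ord (c : nat) : c <= n -> #|[set z : 'I_n | z < c]| = c.
Proof.
move=> Hc; have -> : [set z : 'I_n | z < c] = widen_ord Hc @: [set: 'I_c].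
  apply/setP => z; rewrite inE; apply/idP/imsetP => [Hz | [u _ ->]] //=.
  by exists (Ordinal Hz); rewrite ?inE //; apply: val_inj.
rewrite card_imset ?cardsT ?card_ord // => u v /(congr1 val) /= E; exact: val_inj.
Qed.

Lemma card_lt_perm (s : 'S_n) y : #|[set x | s x < s y]| = s y.
Proof.
rewrite -[RHS](@card_lt_ord (s y)); last exact: ltnW.
have -> : [set x | s x < s y] = s @^-1: [set z : 'I_n | z < s y].
  by apply/setP => x; rewrite !inE.
by rewrite card_preimset //; apply: perm_inj.
Qed.

Lemma std_uniq w (s : 'S_n) :
  (forall x y, prec plus w x y = (s x < s y)) -> std w = s.
Proof.
move=> H; apply/permP => y; apply: val_inj; rewrite permE /= /rk.
rewrite -card_lt_perm; apply: eq_card => x; by rewrite !inE H.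
Qed.


Lemma cond_prec (ai aj pi pj : nat) : pi != pj ->
  [&& (ai <= aj) & if (pi < pj) then (ai < aj) || ((ai == aj) && plus ai)
                   else (ai < aj) || ((ai == aj) && ~~ plus ai)] = precN plus ai pi aj pj.
Proof.
rewrite /precN => H; case: (ltngtP ai aj) => [E|E|<-]; rewrite ?eqxx ?ltnn /=.
- by case: ifP.
- by [].
- case: (plus ai); case: (ltngtP pi pj) H => //=; lia.
Qed.

Lemma NcountE (pi : 'S_n) :
  Ncount m plus pi = #|[set w : {ffun 'I_n -> 'I_m} | std w == (pi^-1)%g]|.
Proof.
pose g := fun a : {ffun 'I_n -> 'I_m} => [ffun x => a ((pi^-1)%g x)].
have bg : bijective g.
  exists (fun w : {ffun 'I_n -> 'I_m} => [ffun s => w (pi s)]) => a;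
  by apply/ffunP => x; rewrite !ffunE ?permK ?permKV.
rewrite -(card_bij_set _ bg) /Ncount; apply: eq_card => a; rewrite !inE.
have gE : forall s, g a (pi s) = a s by move=> s; rewrite ffunE permK.
have consec : forall i j : 'I_n, nat_of_ord j = i.+1 ->
   [&& (a i <= a j)%N &
         if (pi i < pi j)%N
         then (a i < a j)%N || ((a i == a j) && plus (a i))
         else (a i < a j)%N || ((a i == a j) && ~~ plus (a i))]
   = prec plus (g a) (pi i) (pi j).
  move=> i j E; rewrite /prec !gE; apply: cond_prec.
  apply/eqP => /val_inj /perm_inj Eij; move: E; rewrite Eij; lia.
apply/idP/idP.
- move=> H.
  have step : forall i j : 'I_n, nat_of_ord j = i.+1 -> prec plus (g a) (pi i) (pi j).
    move=> i j E; rewrite -consec //.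
    by move/forallP: H => /(_ i)/forallP/(_ j)/implyP; apply; apply/eqP.
  have chain : forall d (i j : 'I_n), nat_of_ord j = i + d.+1 ->
      prec plus (g a) (pi i) (pi j).
    elim=> [|d IH] i j E; first by apply: step; lia.
    have Hk : i + d.+1 < n by have := ltn_ord j; lia.
    apply: (@precN_trans _ _ _ (g a (pi (Ordinal Hk))) (pi (Ordinal Hk))).
      by apply: (IH i (Ordinal Hk)).
    by apply: step => /=; lia.
  apply/eqP; apply: std_uniq => x y.
  have [s ->] : exists s, x = pi s by exists ((pi^-1)%g x); rewrite permKV.
  have [t ->] : exists t, y = pi t by exists ((pi^-1)%g y); rewrite permKV.
  rewrite !permK; case: (ltngtP s t) => E.
  + by apply: (chain (t - s).-1); lia.
  + apply/negbTE/negP => H1; apply: (precN_asym H1); apply: (chain (s - t).-1); lia.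
  + have -> : s = t by apply: val_inj.
    by rewrite /prec precN_irr.
- move/eqP => H; apply/forallP => i; apply/forallP => j; apply/implyP => /eqP E.
  rewrite consec // std_spec H !permK; lia.
Qed.

End Std.

Lemma lex_lt (d b b' r r' : nat) : r < d -> r' < d ->
  (b * d + r < b' * d + r') = (b < b') || ((b == b') && (r < r')).
Proof.
move=> Hr Hr'; case: (ltngtP b b') => E /=.
- have : b.+1 * d <= b' * d by rewrite leq_mul2r E orbT.
  rewrite mulSn; move: (b * d) (b' * d) => X Y H; apply/idP. lia.
- have : b'.+1 * d <= b * d by rewrite leq_mul2r E orbT.
  rewrite mulSn; move: (b * d) (b' * d) => X Y H; apply/negbTE.  lia.
- by rewrite E ltn_add2l.
Qed.
Lemma lex_eq (d b b' r r' : nat) : r < d -> r' < d ->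
  (b * d + r == b' * d + r') = (b == b') && (r == r').
Proof.
move=> Hr Hr'; case: (ltngtP b b') => E.
- by rewrite ltn_eqF // lex_lt // E.
- by rewrite gtn_eqF // lex_lt // E.
- by rewrite E eqn_add2l.
Qed.

Section Prod.
Variables (n mZ mW : nat) (pZ pW : nat -> bool).

Definition encr (b : 'I_mW) (a : 'I_mZ) : nat := if pW b then (a : nat) else mZ.-1 - a.
Lemma encr_lt b a : encr b a < mZ.
Proof. rewrite /encr; have := ltn_ord a; case: (pW b); lia. Qed.

Definition enc (b : 'I_mW) (a : 'I_mZ) : nat := b * mZ + encr b a.
Lemma enc_lt b a : enc b a < mW * mZ.
Proof.
rewrite /enc; have := encr_lt b a; have : b.+1 * mZ <= mW * mZ by rewrite leq_mul2r ltn_ord orbT.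
rewrite mulSn; move: (b * mZ) (mW * mZ) => X Y; lia.
Qed.

Definition pWZ (p : nat) : bool :=
  if pW (p %/ mZ) then pZ (p %% mZ) else ~~ pZ (mZ.-1 - p %% mZ).

Lemma pWZ_enc b a : pWZ (enc b a) = if pW b then pZ a else ~~ pZ a.
Proof.
have H0 : 0 < mZ by have := ltn_ord a; lia.
rewrite /pWZ /enc divnMDl // modnMDl divn_small ?encr_lt // modn_small ?encr_lt // addn0.
rewrite /encr; case: (pW b) => //.
have -> : mZ.-1 - (mZ.-1 - a) = a by have := ltn_ord a; lia.
by [].
Qed.

Lemma enc_ltE b a b' a' :
  (enc b a < enc b' a') = (b < b') || ((b == b' :> nat) && (if pW b then a < a' else a' < a)).
Proof.
rewrite /enc lex_lt ?encr_lt //; case: (eqVneq (b : nat) b') => //= E.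
rewrite /encr -E; have := ltn_ord a; have := ltn_ord a'; case: (pW b); lia.
Qed.

Lemma enc_eqE b a b' a' :
  (enc b a == enc b' a') = (b == b' :> nat) && (a == a' :> nat).
Proof.
rewrite /enc lex_eq ?encr_lt //; case: (eqVneq (b : nat) b') => //= E.
rewrite /encr -E; have := ltn_ord a; have := ltn_ord a'; case: (pW b); lia.
Qed.

Lemma key_nat (b b' : 'I_mW) (a a' : 'I_mZ) (x y sx sy : nat) :
  (sx < sy) = precN pZ a x a' y -> (sy < sx) = precN pZ a' y a x ->
  precN pWZ (enc b a) x (enc b' a') y = precN pW b sx b' sy.
Proof.
move=> E1 E2; rewrite /precN enc_ltE enc_eqE pWZ_enc /= E1 E2 /precN.
case: (ltngtP (b : nat) b') => //= Eb.
rewrite Eb; case: (pW b') => /=.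
- by case: (ltngtP (a : nat) a').
- case: (ltngtP (a : nat) a') => //= Ea; rewrite Ea; by case: (pZ _).
Qed.

Definition encO b a : 'I_(mW * mZ) := Ordinal (enc_lt b a).

Definition fpair (p : {ffun 'I_n -> 'I_mZ} * {ffun 'I_n -> 'I_mW}) :
  {ffun 'I_n -> 'I_(mW * mZ)} :=
  [ffun i => encO (p.2 (std pZ p.1 i)) (p.1 i)].

Lemma std_fpair p : std pWZ (fpair p) = (std pZ p.1 * std pW p.2)%g.
Proof.
apply: std_uniq => x y; rewrite !permM -std_spec /prec !ffunE /=.
by apply: key_nat; rewrite -std_spec.
Qed.

Lemma fpair_inj : injective fpair.
Proof.
move=> [w v] [w' v'] /ffunP E /=.
have Ew : w = w'.
  apply/ffunP => i; have := E i; rewrite !ffunE => /(congr1 val) /= /eqP.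
  by rewrite enc_eqE => /andP [_ /eqP H]; apply: val_inj.
subst w'; congr pair; apply/ffunP => j.
have := E ((std pZ w)^-1 j)%g; rewrite !ffunE /= permKV => /(congr1 val) /= /eqP.
by rewrite enc_eqE => /andP [/eqP H _]; apply: val_inj.
Qed.

Lemma fpair_bij : bijective fpair.
Proof.
apply: inj_card_bij fpair_inj _.
by rewrite card_prod !card_ffun !card_ord expnMn mulnC.
Qed.

Lemma comb (s : 'S_n) :
  \sum_(pi : 'S_n) \sum_(tau : 'S_n | (tau * pi)%g == s)
      Ncount mZ pZ pi * Ncount mW pW tau = Ncount (mW * mZ) pWZ s.
Proof.
rewrite NcountE -(card_bij_set _ fpair_bij).
have -> : #|[set p | std pWZ (fpair p) == (s^-1)%g]|
        = #|[set p : {ffun 'I_n -> 'I_mZ} * {ffun 'I_n -> 'I_mW} | (std pZ p.1 * std pW p.2 == s^-1)%g]|.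
  by apply: eq_card => p; rewrite !inE std_fpair.
rewrite card_sum.
rewrite -(pair_bigA _ (fun (w : {ffun 'I_n -> 'I_mZ}) (v : {ffun 'I_n -> 'I_mW}) => ((std pZ w * std pW v == s^-1)%g : nat))) /=.
have E1 : forall pi : 'S_n, \sum_(tau | (tau * pi)%g == s) Ncount mZ pZ pi * Ncount mW pW tau
    = Ncount mZ pZ pi * Ncount mW pW (s * pi^-1)%g.
  move=> pi; apply: big_pred1 => tau /=; apply/eqP/eqP => [<-|->].
    by rewrite mulgK.
  by rewrite mulgKV.
rewrite (eq_bigr _ (fun pi _ => E1 pi)) (reindex_inj invg_inj) /=.
transitivity (\sum_(w : {ffun 'I_n -> 'I_mZ}) Ncount mW pW (s * std pZ w)%g).
  transitivity (\sum_(P : 'S_n) \sum_(w : {ffun 'I_n -> 'I_mZ})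
       ((std pZ w == P) : nat) * Ncount mW pW (s * P)%g).
    apply: eq_bigr => P _; rewrite invgK NcountE invgK card_sum big_distrl /=.
    by [].
  rewrite exchange_big /=; apply: eq_bigr => w _.
  rewrite (bigD1 (std pZ w)) //= eqxx mul1n big1 ?addn0 // => P /negbTE.
  by rewrite eq_sym => ->.
apply: eq_bigr => w _; rewrite NcountE card_sum; apply: eq_bigr => v _.
congr nat_of_bool; apply/eqP/eqP => [->|H].
  by rewrite invMg mulKVg.
by rewrite invMg -H mulKg.
Qed.

End Prod.

Lemma Ncount_ext (n m : nat) (p1 p2 : nat -> bool) (pi : 'S_n) :
  (forall r, (r < m)%N -> p1 r = p2 r) -> Ncount m p1 pi = Ncount m p2 pi.
Proof.
move=> H; apply: eq_card => a; rewrite !inE.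
apply: eq_forallb => i; apply: eq_forallb => j.
by rewrite H.
Qed.

Lemma comb_k (n k l : nat) (pZ pW pR : nat -> bool) (s : 'S_n) :
  (forall p, pWZ (2 * k).+1 pZ pW p = pR p) ->
  (\sum_(pi : 'S_n) \sum_(tau : 'S_n | (tau * pi)%g == s)
      Ncount (2 * k).+1 pZ pi * Ncount (2 * l).+1 pW tau)%N
  = Ncount (2 * (2 * k * l + k + l)).+1 pR s.
Proof.
move=> H; rewrite comb.
have -> : ((2 * (2 * k * l + k + l)).+1 = (2 * l).+1 * (2 * k).+1)%N.
  by rewrite !mulSn !mulnS; lia.
by apply: Ncount_ext => r _; exact: H.
Qed.

Lemma odd_divmod k p : odd p = odd (p %/ (2 * k).+1) (+) odd (p %% (2 * k).+1).
Proof.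
rewrite {1}(divn_eq p (2 * k).+1) oddD oddM /= oddM /= andbT //.
Qed.

Lemma odd_sub_r k p : odd ((2 * k).+1.-1 - p %% (2 * k).+1) = odd (p %% (2 * k).+1).
Proof.
rewrite oddB /= ?oddM //.
have := ltn_pmod p (ltn0Sn (2 * k)); lia.
Qed.

Ltac sgn_tac k p :=
  rewrite /pWZ /= odd_sub_r (odd_divmod k p);
  by case: (odd (p %/ _)); case: (odd (p %% _)).

Lemma sgn1 k p : pWZ (2 * k).+1 (fun p => ~~ odd p) (fun p => ~~ odd p) p = ~~ odd p.
Proof. sgn_tac k p. Qed.
Lemma sgn2 k p : pWZ (2 * k).+1 (fun p => odd p) (fun p => odd p) p = ~~ odd p.
Proof. sgn_tac k p. Qed.
Lemma sgn3 k p : pWZ (2 * k).+1 (fun p => ~~ odd p) (fun p => odd p) p = odd p.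
Proof. sgn_tac k p. Qed.
Lemma sgn4 k p : pWZ (2 * k).+1 (fun p => odd p) (fun p => ~~ odd p) p = odd p.
Proof. sgn_tac k p. Qed.


Local Open Scope ring_scope.

Definition ev (a b : rat) (G : {poly {poly rat}}) : rat := (G.[b%:P]).[a].

Lemma evD a b G H : ev a b (G + H) = ev a b G + ev a b H.
Proof. by rewrite /ev !hornerD. Qed.
Lemma evN a b G : ev a b (- G) = - ev a b G.
Proof. by rewrite /ev !hornerN. Qed.
Lemma evM a b G H : ev a b (G * H) = ev a b G * ev a b H.
Proof. by rewrite /ev !hornerM. Qed.
Lemma evX a b G i : ev a b (G ^+ i) = ev a b G ^+ i.
Proof. by rewrite /ev !horner_exp. Qed.
Lemma evC a b c : ev a b (c%:P%:P) = c.
Proof. by rewrite /ev !hornerC. Qed.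
Lemma ev1 a b : ev a b 1 = 1.
Proof. by rewrite -[1]/((1 : rat)%:P%:P) evC. Qed.
Lemma ev_sum a b (I : finType) (P : pred I) (F : I -> {poly {poly rat}}) :
  ev a b (\sum_(i | P i) F i) = \sum_(i | P i) ev a b (F i).
Proof. by rewrite /ev !horner_sum. Qed.
Lemma evx a b : ev a b varX = a.
Proof. by rewrite /ev /varX hornerC hornerX. Qed.
Lemma evy a b : ev a b varY = b.
Proof. by rewrite /ev /varY hornerX hornerC. Qed.

Lemma ev_peval a b p u : ev a b (peval p u) = p.[ev a b u].
Proof.
rewrite /peval.
have [->|p0] := eqVneq p 0; first by rewrite map_poly0 !horner0 /ev !horner0.
have Hs : size (map_poly (fun c : rat => c%:P%:P) p) = size p.
  by apply: size_map_poly_id0; rewrite !polyC_eq0 lead_coef_eq0.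
rewrite (horner_coef_wide _ (leqnn _)) Hs (horner_coef_wide _ (leqnn _)).
rewrite ev_sum; apply: eq_bigr => i _.
by rewrite evM evX coef_map_id0 ?evC.
Qed.

Lemma ev_half a b u : ev a b (half_shift u) = (ev a b u - 1) * (2%:R)^-1.
Proof. by rewrite /half_shift evM evD evN ev1 evC. Qed.

Lemma half_nat (k : nat) : (((2 * k).+1)%:R - 1) * (2%:R : rat)^-1 = k%:R.
Proof.
rewrite -addn1 natrD addrK natrM mulrC mulKf //.
Qed.

Lemma poly_eq0_inf (R : idomainType) (p : {poly R}) (c : nat -> R) :
  injective c -> (forall k, (0 < k)%N -> p.[c k] = 0) -> p = 0.
Proof.
move=> ci H; apply/eqP; apply/negPn/negP => p0.
suff : (size [seq c k | k <- iota 1 (size p)] < size p)%N by rewrite size_map size_iota ltnn.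
apply: max_poly_roots => //.
  apply/allP => x /mapP [k]; rewrite mem_iota => /andP [k1 _] ->.
  by rewrite /root H.
by rewrite map_inj_uniq ?iota_uniq.
Qed.

Lemma poly_main n (P Q R : 'S_n -> {poly rat}) (NP NQ NR : 'S_n -> nat -> nat) :
  (forall pi k, (0 < k)%N -> (P pi).[k%:R] = (NP pi k)%:R) ->
  (forall pi k, (0 < k)%N -> (Q pi).[k%:R] = (NQ pi k)%:R) ->
  (forall pi k, (0 < k)%N -> (R pi).[k%:R] = (NR pi k)%:R) ->
  (forall s k l, (0 < k)%N -> (0 < l)%N ->
     (\sum_(pi : 'S_n) \sum_(tau : 'S_n | (tau * pi)%g == s) NP pi k * NQ tau l)%N
     = NR s (2 * k * l + k + l)%N) ->
  galg_mul (rho P varX) (rho Q varY) =1 rho R (varX * varY).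
Proof.
move=> HP HQ HR Hc s; apply/eqP; rewrite -subr_eq0; apply/eqP.
set F := _ - _.
have Hev : forall k l, (0 < k)%N -> (0 < l)%N ->
    ev ((2 * k).+1)%:R ((2 * l).+1)%:R F = 0.
  move=> k l k0 l0; rewrite /F evD evN /galg_mul ev_sum /rho.
  rewrite ev_peval ev_half evM evx evy -natrM.
  have -> : ((2 * k).+1 * (2 * l).+1 = (2 * (2 * k * l + k + l)).+1)%N.
    by rewrite !mulSn !mulnS; lia.
  rewrite half_nat HR ?addn_gt0 ?k0 ?orbT // -(Hc s k l) // natr_sum.
  apply/eqP; rewrite subr_eq0; apply/eqP; apply: eq_bigr => pi _; rewrite natr_sum.
  rewrite ev_sum; apply: eq_bigr => tau _.
  by rewrite evM !ev_peval !ev_half evx evy !half_nat HP // HQ // natrM.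
apply: (@poly_eq0_inf _ F (fun l => (((2 * l).+1)%:R : rat)%:P)).
  move=> x y /polyC_inj /eqP; rewrite Num.Theory.eqr_nat => /eqP; lia.
move=> l l0.
apply: (@poly_eq0_inf _ _ (fun k => (((2 * k).+1)%:R : rat))).
  move=> x y /eqP; rewrite Num.Theory.eqr_nat => /eqP; lia.
move=> k k0; exact: Hev.
Qed.
Unset Implicit Arguments.
Set Strict Implicit.

Theorem theorem3p3 (n : nat) (hn : (1 <= n)%N)
  (Oml Omr : 'S_n -> {poly rat})
  (hOml : forall (pi : 'S_n) (k : nat), (0 < k)%N ->
            (Oml pi).[k%:R] = (Omega_left_count pi k)%:R)
  (hOmr : forall (pi : 'S_n) (k : nat), (0 < k)%N ->
            (Omr pi).[k%:R] = (Omega_right_count pi k)%:R) :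
  [/\ galg_mul (rho Oml varX) (rho Oml varY) =1 rho Oml (varX * varY),
      galg_mul (rho Omr varX) (rho Omr varY) =1 rho Oml (varX * varY),
      galg_mul (rho Oml varX) (rho Omr varY) =1 rho Omr (varX * varY) &
      galg_mul (rho Omr varX) (rho Oml varY) =1 rho Omr (varX * varY)].
Proof.
split.
- apply: (poly_main hOml hOml hOml) => s k l _ _.
  rewrite /Omega_left_count; apply: comb_k => p; exact: sgn1.
- apply: (poly_main hOmr hOmr hOml) => s k l _ _.
  rewrite /Omega_left_count /Omega_right_count; apply: comb_k => p; exact: sgn2.
- apply: (poly_main hOml hOmr hOmr) => s k l _ _.
  rewrite /Omega_left_count /Omega_right_count; apply: comb_k => p; exact: sgn3.
- apply: (poly_main hOmr hOml hOmr) => s k l _ _.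
  rewrite /Omega_left_count /Omega_right_count; apply: comb_k => p; exact: sgn4.
Qed.
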